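(* Let $D,W,N_0,\zeta,P_A,h,g,P^{max}>0$, $\gamma=\frac{g\zeta P_A h}{WN_0}$, $\alpha=\mathbb{L}_0\!\left(\frac{\gamma-1}{e}\right)+1$ with $\mathbb{L}_0$ the principal Lambert W function, and $$\dot\tau_S=\frac{D\ln 2}{W\alpha},\quad \dot\tau_0=\frac{D\ln 2}{W\alpha\gamma}\left(2^{\alpha/\ln 2}-1\right),\quad \ddot\tau_S=\frac{D}{W\log_2\left(1+\frac{P^{max}g}{WN_0}\right)},\quad \ddot\tau_0=\frac{P^{max}\ddot\tau_S}{\zeta P_A h}.$$ Consider the problem: minimize $\tau_0+\tau_S$ over $\tau_0,\tau_S,P\ge0$ subject to $P\tau_S\le\zeta P_A h\tau_0$, $\tau_S W\log_2\left(1+\frac{Pg}{WN_0}\right)\ge D$, and $P\le P^{max}$. If $\zeta P_A h\dot\tau_0/\dot\tau_S\le P^{max}$, then $(\tau_0,\tau_S,P)=(\dot\tau_0,\dot\tau_S,\zeta P_A h\dot\tau_0/\dot\tau_S)$ is optimal. Otherwise $(\tau_0,\tau_S,P)=(\ddot\tau_0,\ddot\tau_S,P^{max})$ is optimal.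
   Context: Single source wireless powered network: the source harvests energy $\zeta P_A h\tau_0$ during time $\tau_0$, then transmits $D$ bits with power $P\le P^{max}$ during time $\tau_S$ over an AWGN channel with gain $g$, bandwidth $W$ and noise spectral density $N_0$. *)

(* Defs.v *)
From Stdlib Require Import Reals ClassicalEpsilon.
Open Scope R_scope.

(* Principal branch of the Lambert W function: for x >= -1/e, the unique
   w >= -1 with w * e^w = x (chosen by Hilbert's epsilon; its value is
   unspecified outside the domain x >= -1/e). *)
Definition LambertW0 (x : R) : R :=
  epsilon (inhabits 0) (fun w => -1 <= w /\ w * exp w = x).

Definition log2 (x : R) : R := ln x / ln 2.

Definition feasible (D W N0 zeta PA h g Pmax : R) (t0 tS P : R) : Prop :=
  0 <= t0 /\ 0 <= tS /\ 0 <= P /\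
  P * tS <= zeta * PA * h * t0 /\
  tS * W * log2 (1 + P * g / (W * N0)) >= D /\
  P <= Pmax.

Definition optimal (D W N0 zeta PA h g Pmax : R) (t0 tS P : R) : Prop :=
  feasible D W N0 zeta PA h g Pmax t0 tS P /\
  forall t0' tS' P', feasible D W N0 zeta PA h g Pmax t0' tS' P' ->
    t0 + tS <= t0' + tS'.

(* Main.v *)
Require Import Defs.
From Stdlib Require Import Reals Lra Psatz ClassicalEpsilon.
Open Scope R_scope.

Lemma ln_le_sub1 u : 0 < u -> ln u <= u - 1.
Proof. intro Hu. pose proof (exp_ineq1_le (ln u)). rewrite exp_ln in H by lra. lra. Qed.

Lemma lambert_spec t : - / exp 1 < t ->
  -1 < LambertW0 t /\ LambertW0 t * exp (LambertW0 t) = t.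
Proof.
  intro Ht.
  assert (Hex : exists w, -1 <= w /\ w * exp w = t).
  { set (f := fun w => w * exp w - t).
    assert (Hc : continuity f).
    { apply derivable_continuous. unfold f.
      apply (derivable_minus (fun w => w * exp w) (fun _ => t)).
      - apply (derivable_mult id exp). apply derivable_id. apply derivable_exp.
      - apply derivable_const. }
    set (y := Rabs t + 1).
    assert (Hy : -1 <= y) by (unfold y; pose proof (Rabs_pos t); lra).
    destruct (IVT_cor f (-1) y Hc Hy) as [z [Hz Hfz]].
    { unfold f. assert (exp (-1) = / exp 1) by (replace (-1) with (- (1)) by ring; rewrite exp_Ropp; reflexivity).
      assert (1 <= exp y) by (pose proof (exp_ineq1_le y); unfold y in *; pose proof (Rabs_pos t); lra).
      assert (t <= Rabs t) by apply RRle_abs.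
      assert (y <= y * exp y) by (unfold y in *; pose proof (Rabs_pos t); nra).
      assert (-1 * exp (-1) - t < 0) by lra.
      assert (y * exp y - t > 0) by (unfold y in *; lra).
      nra. }
    exists z. unfold f in Hfz. split; lra. }
  assert (H := epsilon_spec (inhabits 0) (fun w => -1 <= w /\ w * exp w = t) Hex).
  fold (LambertW0 t) in H. destruct H as [H1 H2]. split; [|exact H2].
  destruct H1 as [H1|H1]; [exact H1|]. exfalso. rewrite <- H1 in H2.
  replace (-1) with (- (1)) in H2 by ring. rewrite exp_Ropp in H2. lra.
Qed.


Lemma div_le_l a b c : 0 < c -> a / c <= b -> a <= b * c.
Proof. intros Hc H. replace a with ((a / c) * c) by (field; lra). apply Rmult_le_compat_r; lra. Qed.
Lemma div_le_r a b c : 0 < c -> a <= b * c -> a / c <= b.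
Proof. intros Hc H. replace b with ((b * c) / c) by (field; lra). unfold Rdiv. apply Rmult_le_compat_r; [apply Rlt_le, Rinv_0_lt_compat; lra|lra]. Qed.

Lemma le_div a b c : 0 < c -> a <= b / c -> a * c <= b.
Proof. intros Hc H. replace b with ((b / c) * c) by (field; lra). apply Rmult_le_compat_r; lra. Qed.

Lemma lb D W N0 zeta PA h g Pmax t0 tS P m :
  0 < D -> 0 < W -> 0 < N0 -> 0 < zeta -> 0 < PA -> 0 < h -> 0 < g -> 0 < m ->
  feasible D W N0 zeta PA h g Pmax t0 tS P ->
  (0 < P -> P <= Pmax -> m * ln (1 + P * g / (W * N0)) <= g / (W * N0) * (zeta * PA * h + P)) ->
  D * ln 2 * m / (W * (g / (W * N0)) * (zeta * PA * h)) <= t0 + tS.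
Proof.
  intros HD HW HN Hz HPA Hh Hg Hm [H0 [HS [HP [Hen [Hrate HPm]]]]] Hcond.
  set (a := g / (W * N0)) in *. set (c := zeta * PA * h) in *.
  assert (Ha : 0 < a) by (unfold a; apply Rdiv_lt_0_compat; nra).
  assert (Hc : 0 < c) by (unfold c; apply Rmult_lt_0_compat; nra).
  assert (HPa : P * g / (W * N0) = P * a) by (unfold a; field; lra).
  rewrite HPa in Hrate, Hcond.
  assert (Hl2 : 0 < ln 2) by (pose proof ln_lt_2; lra).
  unfold log2 in Hrate.
  assert (HPpos : 0 < P).
  { destruct HP as [HP|HP]; [exact HP|]. subst P. rewrite Rmult_0_l, Rplus_0_r, ln_1 in Hrate.
    unfold Rdiv in Hrate. rewrite Rmult_0_l, Rmult_0_r in Hrate. lra. }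
  set (L := ln (1 + P * a)) in *.
  assert (HL : 0 < L) by (unfold L; rewrite <- ln_1; apply ln_increasing; nra).
  assert (HtL : D * ln 2 <= tS * W * L).
  { replace (tS * W * (L / ln 2)) with (tS * W * L / ln 2) in Hrate by (field; lra).
    apply Rge_le in Hrate. apply le_div in Hrate; [lra|exact Hl2]. }
  specialize (Hcond HPpos HPm).
  apply Rle_trans with (tS * W * L * (m / (W * a * c))).
  { replace (D * ln 2 * m / (W * a * c)) with (D * ln 2 * (m / (W * a * c))) by (field; nra).
    apply Rmult_le_compat_r; [|exact HtL]. apply Rlt_le, Rdiv_lt_0_compat; [lra|].
    apply Rmult_lt_0_compat; [nra|lra]. }
  replace (tS * W * L * (m / (W * a * c))) with ((m * L) * (tS / (a * c))) by (field; nra).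
  apply Rle_trans with ((a * (c + P)) * (tS / (a * c))).
  { apply Rmult_le_compat_r; [|lra]. apply Rmult_le_pos; [exact HS|].
    apply Rlt_le, Rinv_0_lt_compat; nra. }
  replace ((a * (c + P)) * (tS / (a * c))) with (tS + P * tS / c) by (field; repeat split; lra).
  assert (P * tS / c <= t0) by (apply div_le_r; [exact Hc| lra]).
  lra.
Qed.

Lemma ln_div_le u v : 0 < u -> 0 < v -> ln u - ln v <= u / v - 1.
Proof.
  intros Hu Hv. pose proof (ln_le_sub1 (u / v)) as H.
  unfold Rdiv in H. rewrite ln_mult, ln_Rinv in H; try lra.
  - unfold Rdiv. apply H. apply Rmult_lt_0_compat; [lra|apply Rinv_0_lt_compat; lra].
  - apply Rinv_0_lt_compat; lra.
Qed.

Theorem theorem2 (D W N0 zeta PA h g Pmax : R) :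
  0 < D -> 0 < W -> 0 < N0 -> 0 < zeta -> 0 < PA -> 0 < h -> 0 < g -> 0 < Pmax ->
  let gamma := g * zeta * PA * h / (W * N0) in
  let alpha := LambertW0 ((gamma - 1) / exp 1) + 1 in
  let tauS1 := D * ln 2 / (W * alpha) in
  let tau01 := D * ln 2 / (W * alpha * gamma) * (Rpower 2 (alpha / ln 2) - 1) in
  let tauS2 := D / (W * log2 (1 + Pmax * g / (W * N0))) in
  let tau02 := Pmax * tauS2 / (zeta * PA * h) in
  (zeta * PA * h * tau01 / tauS1 <= Pmax ->
     optimal D W N0 zeta PA h g Pmax tau01 tauS1 (zeta * PA * h * tau01 / tauS1)) /\
  (~ (zeta * PA * h * tau01 / tauS1 <= Pmax) ->
     optimal D W N0 zeta PA h g Pmax tau02 tauS2 Pmax).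
Proof.
  intros HD HW HN Hz HPA Hh Hg HPm gamma alpha tauS1 tau01 tauS2 tau02.
  set (a := g / (W * N0)).
  set (c := zeta * PA * h).
  assert (Ha : 0 < a) by (unfold a; apply Rdiv_lt_0_compat; nra).
  assert (Hc : 0 < c) by (unfold c; apply Rmult_lt_0_compat; nra).
  assert (Hgam : gamma = a * c) by (unfold gamma, a, c; field; nra).
  assert (He : 0 < exp 1) by apply exp_pos.
  assert (Ht : - / exp 1 < (gamma - 1) / exp 1).
  { unfold Rdiv. rewrite Hgam. assert (0 < / exp 1) by (apply Rinv_0_lt_compat; lra).
    assert (0 < a * c) by (apply Rmult_lt_0_compat; lra).
    assert (0 < a * c * / exp 1) by (apply Rmult_lt_0_compat; lra). lra. }
  destruct (lambert_spec _ Ht) as [Hw1 Hw2].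
  set (w := LambertW0 ((gamma - 1) / exp 1)) in *.
  assert (Hal : 0 < alpha) by (unfold alpha; lra).
  set (X := exp alpha).
  assert (HX1 : 1 < X) by (unfold X; pose proof (exp_ineq1 alpha); lra).
  assert (Hkey : X * (alpha - 1) = gamma - 1).
  { unfold X, alpha. replace (w + 1 - 1) with w by ring. rewrite exp_plus.
    replace (exp w * exp 1 * w) with ((w * exp w) * exp 1) by ring. rewrite Hw2. field. lra. }
  assert (Hl2 : 0 < ln 2) by (pose proof ln_lt_2; lra).
  assert (HRp : Rpower 2 (alpha / ln 2) = X).
  { unfold Rpower, X. f_equal. field. lra. }
  assert (HPs : c * tau01 / tauS1 = (X - 1) / a).
  { unfold tau01, tauS1. rewrite HRp, Hgam. field. repeat split; try lra; nra. }
  fold c. rewrite HPs.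
  split.
  -
    intro Hcase. split.
    + unfold feasible. fold c.
      assert (H1 : 1 + (X - 1) / a * g / (W * N0) = X) by (unfold a; field; repeat split; nra).
      rewrite H1. unfold log2. fold X.
      assert (HtS : 0 < tauS1) by (unfold tauS1; apply Rdiv_lt_0_compat; nra).
      assert (Ht0 : tau01 = (X - 1) / a / c * tauS1) by (unfold tau01, tauS1; rewrite HRp, Hgam; field; repeat split; nra).
      assert (0 <= (X - 1) / a) by (apply Rlt_le, Rdiv_lt_0_compat; lra).
      assert (0 <= (X - 1) / a / c) by (apply Rlt_le, Rdiv_lt_0_compat; [apply Rdiv_lt_0_compat|]; lra).
      repeat split.
      * rewrite Ht0. nra.
      * lra.
      * lra.
      * rewrite Ht0. right. field. repeat split; lra.
      * unfold X. rewrite ln_exp. right. unfold tauS1. field. repeat split; lra.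
      * exact Hcase.
    + intros t0' tS' P' Hf.
      assert (Hv : tau01 + tauS1 = D * ln 2 * X / (W * a * c)).
      { unfold tau01, tauS1. rewrite HRp. rewrite Hgam in Hkey |- *.
        assert (Hs : X - 1 + a * c = X * alpha) by lra.
        transitivity (D * ln 2 * (X - 1 + a * c) / (W * alpha * (a * c))).
        { field. repeat split; lra. }
        rewrite Hs. field. repeat split; lra. }
      rewrite Hv. apply (lb D W N0 zeta PA h g Pmax t0' tS' P' X); try lra; try exact Hf.
      intros HP _. fold a c. replace (P' * g / (W * N0)) with (P' * a) by (unfold a; field; lra).
      assert (Hy : 0 < 1 + P' * a) by nra.
      pose proof (ln_div_le (1 + P' * a) X Hy ltac:(lra)) as Hd.
      unfold X at 1 in Hd. rewrite ln_exp in Hd.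
      assert (X * ln (1 + P' * a) <= X * (alpha + (1 + P' * a) / X - 1)) by (apply Rmult_le_compat_l; lra).
      replace (X * (alpha + (1 + P' * a) / X - 1)) with (X * (alpha - 1) + 1 + P' * a) in H by (field; lra).
      rewrite Hkey, Hgam in H. lra.
  - intro Hcase. apply Rnot_le_lt in Hcase.
    assert (Hxm : 1 + Pmax * a < X).
    { assert (Pmax * a < (X - 1) / a * a) by (apply Rmult_lt_compat_r; lra).
      replace ((X - 1) / a * a) with (X - 1) in H by (field; lra). lra. }
    assert (Hg2 : Pmax * g / (W * N0) = Pmax * a) by (unfold a; field; lra).
    set (xm := 1 + Pmax * a) in *.
    assert (Hxm1 : 1 < xm) by (unfold xm; nra).
    set (Lm := ln xm).
    assert (HLm : 0 < Lm) by (unfold Lm; rewrite <- ln_1; apply ln_increasing; lra).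
    assert (HtS2 : tauS2 = D * ln 2 / (W * Lm)).
    { unfold tauS2, log2. rewrite Hg2. fold xm Lm. field. repeat split; lra. }
    assert (HtS2p : 0 < tauS2) by (rewrite HtS2; apply Rdiv_lt_0_compat; nra).
    split.
    + unfold feasible. fold c. rewrite Hg2. fold xm. unfold log2. fold Lm.
      repeat split.
      * unfold tau02. fold c. apply Rlt_le, Rdiv_lt_0_compat; nra.
      * lra.
      * lra.
      * unfold tau02. fold c. right. field. lra.
      * rewrite HtS2. right. field. repeat split; lra.
      * lra.
    + intros t0' tS' P' Hf.
      set (m := (a * c - 1 + xm) / Lm).
      assert (HNp : 0 < a * c - 1 + xm) by (unfold xm; assert (0 < a * c) by nra; nra).
      assert (Hm : 0 < m) by (unfold m; apply Rdiv_lt_0_compat; lra).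
      assert (Hv : tau02 + tauS2 = D * ln 2 * m / (W * a * c)).
      { unfold tau02, m. fold c. rewrite HtS2. unfold xm. field. repeat split; lra. }
      rewrite Hv. apply (lb D W N0 zeta PA h g Pmax t0' tS' P' m); try lra; try exact Hf.
      intros HP HPP. fold a c. replace (P' * g / (W * N0)) with (P' * a) by (unfold a; field; lra).
      assert (HXa : X * (1 - alpha) <= 1).
      { pose proof (exp_ineq1_le (- alpha)) as Hea.
        assert (HXi : exp (- alpha) = / X) by (rewrite exp_Ropp; reflexivity).
        rewrite HXi in Hea.
        assert (X * (1 + - alpha) <= X * / X) by (apply Rmult_le_compat_l; lra).
        rewrite Rinv_r in H by lra. lra. }
      set (q := xm / X).
      assert (Hxq : xm = q * X) by (unfold q; field; lra).
      assert (Hq1 : q < 1) by nra.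
      assert (Hqa : 0 <= alpha - 1 + q) by nra.
      pose proof (ln_div_le xm X ltac:(lra) ltac:(lra)) as Hd2.
      fold Lm in Hd2. unfold X at 1 in Hd2. rewrite ln_exp in Hd2. fold q in Hd2.
      assert (Hmx : xm * Lm <= a * c - 1 + xm).
      { assert (xm * Lm <= xm * (alpha + q - 1)) by (apply Rmult_le_compat_l; lra).
        rewrite Hgam in Hkey.
        assert (0 <= X * ((1 - q) * (alpha - 1 + q))) by (apply Rmult_le_pos; nra).
        rewrite Hxq in H |- *. nra. }
      assert (HmLm : m * Lm = a * c - 1 + xm) by (unfold m; field; lra).
      assert (Hmxm : xm <= m).
      { nra. }
      assert (Hy : 0 < 1 + P' * a) by nra.
      assert (Hyx : 1 + P' * a <= xm) by (unfold xm; nra).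
      pose proof (ln_div_le (1 + P' * a) xm Hy ltac:(lra)) as Hd3. fold Lm in Hd3.
      set (r := (1 + P' * a) / xm) in *.
      assert (Hyr : 1 + P' * a = r * xm) by (unfold r; field; lra).
      assert (Hr1 : r <= 1) by nra.
      assert (m * ln (1 + P' * a) <= m * (Lm + r - 1)) by (apply Rmult_le_compat_l; lra).
      assert (m * (r - 1) <= xm * (r - 1)) by nra.
      nra.
Qed.
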